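(* Let $K\ge 1$, $\alpha\in[K]=\{1,\dots,K\}$ and $F\in\mathbb{Z}^+$, and consider the coded caching problem with the symmetric $(K,\alpha,F)$ FDS structure, with $N=F\binom{K}{\alpha}\ge K$ files. Let $R^\star_{\mathrm{u},\mathrm{s}}(M)$ be the optimal worst-case communication load under uncoded and selfish cache placement when each user has a cache of $M$ files. Define $R_{\mathrm{LB}}(M)$ on $[0,\alpha N/K]$ as the piecewise linear function obtained by linear interpolation between the consecutive corner points $$\big(M,R_{\mathrm{LB}}\big)=\left(t\frac{N}{K},\ \frac{\binom{\alpha}{t+1}+(K-\alpha)\binom{\alpha-1}{t}}{\binom{\alpha}{t}}\right),\qquad t\in\{0,1,\dots,\alpha\}.$$ Then $R^\star_{\mathrm{u},\mathrm{s}}(M)\ge R_{\mathrm{LB}}(M)$ for all $M\in[0,\alpha N/K]$. Moreover, at each corner point, writing $\gamma=M/N=t/K$ and $\gamma_\alpha=K\gamma/\alpha$, the corner value equals $$R_{\mathrm{LB}}=\frac{K(1-\gamma_\alpha)}{K\gamma+1}\big[(K-\alpha)\gamma+1\big].$$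
   Context: Notation: $[n]=\{1,\dots,n\}$, $[a:b]=\{a,\dots,b\}$; $\binom{n}{k}=0$ whenever $n<0$, $k<0$ or $n<k$. Symmetric $(K,\alpha,F)$ FDS structure: the library consists of $N=F\binom{K}{\alpha}$ distinct files $W_{f,\mathcal S}$, indexed by $f\in[F]$ and $\mathcal S\subseteq[K]$ with $|\mathcal S|=\alpha$; the file class $\mathcal W_{\mathcal S}=\{W_{f,\mathcal S}:f\in[F]\}$ is of interest exactly to the users in $\mathcal S$. The file demand set (FDS) of user $k\in[K]$ is $\mathcal F_k=\{W_{f,\mathcal S}: f\in[F],\ |\mathcal S|=\alpha,\ k\in\mathcal S\}$. Caching model (centralized): a server stores the $N$ files, each consisting of $B$ independent uniformly random bits, and is connected to $K$ users by an error-free shared broadcast link; each user has a cache of $MB$ bits. In the placement phase the server fills the caches without knowing the future demands. In the delivery phase each user $k$ requests one file $W_{f_k,\mathcal D_k}\in\mathcal F_k$; the server then broadcasts a message, as a function of the library and the demands, from which each user must decode its requested file using its cache contents. A pair $(M,R)$ is achievable if there is a placement and delivery scheme such that, for every admissible demand (each user requesting a file in its own FDS), the number of transmitted bits is at most $RB$. The optimal worst-case load is $\inf\{R:(M,R)\text{ achievable}\}$. Uncoded and selfish placement: the cache of each user consists of plain copies of bits of the files (uncoded), and user $k$ may cache bits of a file $W_{f,\mathcal S}$ only if $W_{f,\mathcal S}\in\mathcal F_k$, i.e. only if $k\in\mathcal S$ (selfish). $R^\star_{\mathrm{u},\mathrm{s}}(M)$ is the optimal worst-case load when the placement is restricted to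 be uncoded and selfish. *)

(* Defs.v *)
From HB Require Import structures.
From mathcomp Require Import all_boot all_order all_algebra.
Set Implicit Arguments. Unset Strict Implicit. Unset Printing Implicit Defensive.
Import Order.TTheory GRing.Theory Num.Theory.
Local Open Scope ring_scope.

Definition fidx (K alpha F : nat) : finType :=
  {x : 'I_F * {set 'I_K} | #|x.2| == alpha}.

Definition interested K alpha F (k : 'I_K) (n : fidx K alpha F) : bool :=
  k \in (val n).2.

Definition nfiles (K alpha F : nat) : nat := (F * 'C(K, alpha))%N.

Definition library K alpha F (B : nat) := fidx K alpha F -> 'I_B -> bool.

Definition demand K alpha F := 'I_K -> fidx K alpha F.
Definition admissible K alpha F (d : demand K alpha F) : Prop :=
  forall k, interested k (d k).

(* Uncoded placement: user k stores the plain bits indexed by Z k.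
   The cache content, as seen by user k, is the library restricted to Z k. *)
Definition cache_content K alpha F B (Z : 'I_K -> {set (fidx K alpha F * 'I_B)})
  (k : 'I_K) (lib : library K alpha F B) : fidx K alpha F * 'I_B -> bool :=
  fun p => (p \in Z k) && lib p.1 p.2.

Definition achievable_us (R : realFieldType) (K alpha F : nat) (M Rt : R) : Prop :=
  exists (B L : nat) (Z : 'I_K -> {set (fidx K alpha F * 'I_B)})
    (enc : demand K alpha F -> library K alpha F B -> 'I_L -> bool)
    (dec : 'I_K -> demand K alpha F -> (fidx K alpha F * 'I_B -> bool) ->
           ('I_L -> bool) -> 'I_B -> bool),
    [/\ (0 < B)%N,
        (L%:R <= Rt * B%:R),
        (forall k, #|Z k|%:R <= M * B%:R),
        (forall k p, p \in Z k -> interested k p.1) &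
        (forall d : demand K alpha F, admissible d ->
           forall (lib : library K alpha F B) (k : 'I_K) (i : 'I_B),
             dec k d (cache_content Z k lib) (enc d lib) i = lib (d k) i)].

Definition RLB_corner (R : realFieldType) (K alpha t : nat) : R :=
  ('C(alpha, t.+1)%:R + (K - alpha)%:R * 'C(alpha.-1, t)%:R) / 'C(alpha, t)%:R.

Definition RLB_seg (R : realFieldType) (K alpha F t : nat) (M : R) : R :=
  let N := (nfiles K alpha F)%:R in
  @RLB_corner R K alpha t +
  (M - t%:R * N / K%:R) / (N / K%:R) *
  (@RLB_corner R K alpha t.+1 - @RLB_corner R K alpha t).

(* Main.v *)
Require Import Defs.
From HB Require Import structures.
From mathcomp Require Import all_boot all_order all_algebra all_fingroup zify ring lra.
From Stdlib Require Import FunctionalExtensionality.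
Set Implicit Arguments. Unset Strict Implicit. Unset Printing Implicit Defensive.
Import Order.TTheory GRing.Theory Num.Theory.

Section Acyc.
Variables (K alpha F B L : nat).
Local Notation FI := (fidx K alpha F).
Variable Z : 'I_K -> {set (FI * 'I_B)}.
Variable enc : demand K alpha F -> library K alpha F B -> 'I_L -> bool.
Variable dec : 'I_K -> demand K alpha F -> (FI * 'I_B -> bool) ->
           ('I_L -> bool) -> 'I_B -> bool.
Variable d : demand K alpha F.
Hypothesis Hdec : forall (lib : library K alpha F B) (k : 'I_K) (i : 'I_B),
             dec k d (cache_content Z k lib) (enc d lib) i = lib (d k) i.
Variable r : 'I_K -> nat.

Definition Sacyc : {set FI * 'I_B} :=
  [set p | [exists j, (p.1 == d j) && [forall i, (r i <= r j) ==> (p \notin Z i)]]].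

Definition libY (Y : {set FI * 'I_B}) : library K alpha F B := fun n b => (n, b) \in Y.

Lemma acyc_bound : #|Sacyc| <= L.
Proof.
pose f (Y : {set FI * 'I_B}) : {ffun 'I_L -> bool} := finfun (enc d (libY Y)).
have inj : {in powerset Sacyc &, injective f}.
  move=> Y1 Y2; rewrite !inE => s1 s2 eqf.
  have eqe : enc d (libY Y1) = enc d (libY Y2).
    apply: functional_extensionality => i.
    by have := congr1 (fun g : {ffun 'I_L -> bool} => g i) eqf; rewrite /f !ffunE.
  have claim : forall n j, r j < n -> forall b, libY Y1 (d j) b = libY Y2 (d j) b.
    elim=> [//|n IH] j; rewrite ltnS => ljn b.
    have eqc : cache_content Z j (libY Y1) = cache_content Z j (libY Y2).
      apply: functional_extensionality => p; rewrite /cache_content.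
      case pZ: (p \in Z j) => //=.
      case pS: (p \in Sacyc).
        move: pS; rewrite inE => /existsP [j' /andP [/eqP e1 /forallP H]].
        have : r j' < r j.
          rewrite ltnNge; apply/negP => le; move: (H j); rewrite le /= pZ //.
        move=> lt; have := IH j' (leq_trans lt ljn) p.2.
        by rewrite /libY -e1 -surjective_pairing.
      have n1 : p \notin Y1 by apply/negP => h; move: (subsetP s1 p h); rewrite pS.
      have n2 : p \notin Y2 by apply/negP => h; move: (subsetP s2 p h); rewrite pS.
      by rewrite /libY -!surjective_pairing (negbTE n1) (negbTE n2).
    by rewrite -!Hdec eqc eqe.
  apply/setP => p.
  case pS: (p \in Sacyc).
    move: (pS); rewrite inE => /existsP [j /andP [/eqP e1 _]].
    have := claim (r j).+1 j (ltnSn _) p.2.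
    by rewrite /libY -e1 -surjective_pairing.
  have n1 : p \notin Y1 by apply/negP => h; move: (subsetP s1 p h); rewrite pS.
  have n2 : p \notin Y2 by apply/negP => h; move: (subsetP s2 p h); rewrite pS.
  by rewrite (negbTE n1) (negbTE n2).
have := card_in_imset inj; rewrite card_powerset => e.
have : 2 ^ #|Sacyc| <= 2 ^ L.
  rewrite -e -[X in _ <= 2 ^ X]card_ord -[X in _ <= X ^ _](card_bool) -card_ffun.
  exact: max_card.
by rewrite leq_exp2l.
Qed.
End Acyc.

Lemma mem_imset_perm (T : finType) (s : {perm T}) (A : {set T}) z :
  (z \in s @: A) = (s^-1%g z \in A).
Proof. by rewrite -{1}(permKV s z) mem_imset //; exact: perm_inj. Qed.

Lemma imset_permM (T : finType) (s t : {perm T}) (A : {set T}) :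
  (s * t)%g @: A = t @: (s @: A).
Proof. by rewrite -imset_comp; apply: eq_imset => x; rewrite permM. Qed.

Lemma perm_onS (T : finType) (U V : {set T}) (s : {perm T}) :
  U \subset V -> perm_on U s -> perm_on V s.
Proof. by move=> sUV psU; apply: subset_trans sUV. Qed.

Lemma trans_set (T : finType) (U : {set T}) : forall n (X Y : {set T}),
  #|X :\: Y| = n -> X \subset U -> Y \subset U -> #|X| = #|Y| ->
  exists tau : {perm T}, perm_on U tau /\ tau @: X = Y.
Proof.
elim=> [|n IH] X Y hn sXU sYU hc.
  exists 1%g; split; first exact: perm_on1.
  rewrite imset_perm1; apply/eqP; rewrite eqEcard hc leqnn andbT.
  by rewrite -setD_eq0 -cards_eq0 hn.
have [x xXY] : exists x, x \in X :\: Y by apply/card_gt0P; rewrite hn.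
have hYX : #|Y :\: X| = n.+1.
  have e1 := cardsID Y X; have e2 := cardsID X Y.
  rewrite setIC in e2; lia.
have [y yYX] : exists y, y \in Y :\: X by apply/card_gt0P; rewrite hYX.
move: (xXY) (yYX); rewrite !inE => /andP [xnY xX] /andP [ynX yY].
have xU : x \in U by apply: (subsetP sXU).
have yU : y \in U by apply: (subsetP sYU).
have pt : perm_on U (tperm x y).
  apply: perm_onS (tperm_on x y); apply/subsetP => z; rewrite !inE.
  by case/orP => /eqP ->.
set X' := tperm x y @: X.
have eX' : forall z, (z \in X') = (tperm x y z \in X).
  by move=> z; rewrite /X' mem_imset_perm tpermV.
have hn' : #|X' :\: Y| = n.
  have -> : X' :\: Y = (X :\: Y) :\ x.
    apply/setP => z; rewrite !inE eX'.
    case: (tpermP x y z) => [->|->|/eqP zx /eqP zy].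
    - by rewrite eqxx (negbTE ynX) andbF.
    - by rewrite yY /= andbF.
    - by rewrite zx.
  by move: hn; rewrite (cardsD1 x (X :\: Y)) xXY; lia.
have sX'U : X' \subset U.
  apply/subsetP => z; rewrite eX' => zX.
  by rewrite -(perm_closed _ pt) (subsetP sXU).
have hc' : #|X'| = #|Y| by rewrite /X' card_imset //; exact: perm_inj.
have [tau' [pt' e']] := IH X' Y hn' sX'U sYU hc'.
exists (tperm x y * tau')%g; split; first exact: perm_onM.
by rewrite imset_permM.
Qed.

Lemma trans_pair (T : finType) (A T1 A' T1' : {set T}) :
  T1 \subset A -> T1' \subset A' -> #|A| = #|A'| -> #|T1| = #|T1'| ->
  exists tau : {perm T}, tau @: A = A' /\ tau @: T1 = T1'.
Proof.
move=> sT sT' hA hT.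
have [t1 [_ e1]] := trans_set (U := setT) erefl (subsetT A) (subsetT A') hA.
have sT2 : t1 @: T1 \subset A' by rewrite -e1; exact: imsetS.
have hT2 : #|t1 @: T1| = #|T1'| by rewrite card_imset //; exact: perm_inj.
have [t2 [p2 e2]] := trans_set erefl sT2 sT' hT2.
exists (t1 * t2)%g; rewrite !imset_permM e1 e2; split => //.
exact: im_perm_on.
Qed.

Definition qc n (X Y A T : {set 'I_n}) : nat :=
  \sum_(s : {perm 'I_n}) ((s @: X == A) && [disjoint s @: Y & T]).

Lemma disjoint_imset_perm n (t : {perm 'I_n}) (B C : {set 'I_n}) :
  [disjoint t @: B & t @: C] = [disjoint B & C].
Proof.
rewrite -!setI_eq0 -imsetI ?imset_eq0 //.
by move=> x y _ _; exact: perm_inj.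
Qed.

Lemma qc_inv n (X Y A T : {set 'I_n}) (t : {perm 'I_n}) :
  qc X Y (t @: A) (t @: T) = qc X Y A T.
Proof.
rewrite /qc (reindex_inj (mulIg t)) /=.
apply: eq_bigr => s _.
rewrite !imset_permM disjoint_imset_perm.
by rewrite (inj_eq (imset_inj (@perm_inj _ t))).
Qed.

Definition validp n a s (A T : {set 'I_n}) : bool :=
  [&& #|A| == a, T \subset A & #|T| == s].

Lemma qc_sum n (X Y : {set 'I_n}) s :
  \sum_(A : {set 'I_n}) \sum_(T : {set 'I_n}) (validp #|X| s A T * qc X Y A T)
  = n`! * 'C(#|X :\: Y|, s).
Proof.
rewrite /qc.
under eq_bigr => A _ do under eq_bigr => T _ do rewrite big_distrr /=.
under eq_bigr => A _ do rewrite exchange_big /=.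
rewrite exchange_big /=.
rewrite -card_Sn -sum_nat_const.
apply: eq_bigr => s0 _.
rewrite (bigD1 (s0 @: X)) //= [X in _ + X]big1 ?addn0; last first.
  move=> A nA; apply: big1 => T _.
  by rewrite eq_sym (negbTE nA) /= muln0.
rewrite -(card_imset (X :\: Y) (@perm_inj _ s0)) -(cards_draws (s0 @: (X :\: Y))).
rewrite -sum1_card [RHS]big_mkcond /=; apply: eq_bigr => T _.
rewrite /validp card_imset; last exact: perm_inj.
rewrite eqxx /= inE.
have -> : s0 @: (X :\: Y) = s0 @: X :\: s0 @: Y.
  by apply/setP => z; rewrite !inE !mem_imset_perm !inE.
have -> : (T \subset s0 @: X :\: s0 @: Y) =
  (T \subset s0 @: X) && [disjoint s0 @: Y & T].
  rewrite disjoint_sym disjoint_subset setDE subsetI; congr (_ && _); apply: eq_subset_r => x; by rewrite !inE.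
by rewrite eqxx /=; case: (T \subset s0 @: X); case: (#|T| == s); case: [disjoint s0 @: Y & T].
Qed.

Lemma count_valid n a s :
  \sum_(A : {set 'I_n}) \sum_(T : {set 'I_n}) validp a s A T = 'C(n, a) * 'C(a, s).
Proof.
transitivity (\sum_(A : {set 'I_n}) ((#|A| == a) * 'C(a, s))).
  apply: eq_bigr => A _.
  case hA: (#|A| == a); last by apply: big1 => T _; rewrite /validp hA.
  rewrite mul1n -{2}(eqP hA) -cards_draws -[X in _ = X]sum1_card [RHS]big_mkcond /=.
  by apply: eq_bigr => T _; rewrite /validp hA inE.
rewrite -big_distrl /= -[in RHS](card_ord n) -card_draws -[X in _ = X * _]sum1_card [X in _ = X * _]big_mkcond /=.
by congr (_ * _); apply: eq_bigr => A _; rewrite inE; case: (_ == _).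
Qed.

Lemma qc_const n (X Y A0 T0 : {set 'I_n}) s : validp #|X| s A0 T0 ->
  qc X Y A0 T0 * ('C(n, #|X|) * 'C(#|X|, s)) = n`! * 'C(#|X :\: Y|, s).
Proof.
move=> v0; rewrite -qc_sum -count_valid big_distrr /=.
apply: eq_bigr => A _; rewrite big_distrr /=; apply: eq_bigr => T _.
case v: (validp #|X| s A T); last by rewrite !muln0 mul0n.
move: v0 v; rewrite /validp => /and3P [/eqP a0 s0 /eqP t0] /and3P [/eqP a1 s1 /eqP t1].
have [t [e1 e2]] := trans_pair s0 s1 (etrans a0 (esym a1)) (etrans t0 (esym t1)).
by rewrite -e1 -e2 qc_inv muln1 mul1n.
Qed.

Definition Dset K alpha (k : 'I_K) : {set 'I_K} :=
  [set j : 'I_K | ((j <= k) && (k < j + alpha)) || (k + K < j + alpha)].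
Definition Gset K (k : 'I_K) : {set 'I_K} := [set j : 'I_K | k <= j].

Lemma card_natP n (P : pred nat) : #|[set j : 'I_n | P j]| = \sum_(0 <= j < n) P j.
Proof.
rewrite big_mkord -sum1_card big_mkcond /=; apply: eq_bigr => j _.
by rewrite inE; case: (P j).
Qed.

Lemma card_Dset K alpha (k : 'I_K) : alpha <= K -> #|Dset alpha k| = alpha.
Proof.
move=> aK; rewrite /Dset (card_natP K (fun j => ((j <= k) && (k < j + alpha)) || (k + K < j + alpha))).
have : forall n, \sum_(0 <= j < n) (((j <= k) && (k < j + alpha)) || (k + K < j + alpha))
   = (minn n k.+1 - (k.+1 - alpha)) + (n - (k + K - alpha).+1).
  elim=> [|n IH]; first by rewrite big_geq.
  rewrite big_nat_recr //= IH; lia.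
move=> ->; have := ltn_ord k; lia.
Qed.

Lemma card_DGset K alpha (k : 'I_K) : 1 <= alpha -> alpha <= K ->
  #|Dset alpha k :\: Gset k| = minn k (alpha.-1).
Proof.
move=> a1 aK.
have -> : Dset alpha k :\: Gset k = [set j : 'I_K | (j < k) && (k < j + alpha)].
  apply/setP => j; rewrite !inE; have := ltn_ord j; have := ltn_ord k; lia.
rewrite (card_natP K (fun j => (j < k) && (k < j + alpha))).
have : forall n, \sum_(0 <= j < n) ((j < k) && (k < j + alpha))
   = minn n k - (k.+1 - alpha).
  elim=> [|n IH]; first by rewrite big_geq //; lia.
  rewrite big_nat_recr //= IH; lia.
move=> ->; have := ltn_ord k; lia.
Qed.

Lemma Dset_in K alpha (k : 'I_K) : 1 <= alpha -> k \in Dset alpha k.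
Proof. by move=> a1; rewrite inE leqnn /=; lia. Qed.

Lemma Dset_neq K alpha (j k : 'I_K) : alpha < K -> 1 <= alpha -> j < k ->
  Dset alpha j != Dset alpha k.
Proof.
move=> aK a1 jk; apply/negP => /eqP e.
have j1K : j.+1 < K by apply: leq_trans (ltn_ord k).
have : Ordinal j1K \in Dset alpha j.
  rewrite e inE /=.
  have : j \in Dset alpha k by rewrite -e Dset_in.
  rewrite inE; have := ltn_ord k; lia.
rewrite inE /=; lia.
Qed.

Lemma Dset_inj K alpha (j k : 'I_K) : alpha < K -> 1 <= alpha ->
  Dset alpha j = Dset alpha k -> j = k.
Proof.
move=> aK a1 e; case: (ltngtP j k) => h.
- by move: (Dset_neq aK a1 h); rewrite e eqxx.
- by move: (Dset_neq aK a1 h); rewrite e eqxx.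
- exact: val_inj.
Qed.

Lemma hockey n s : \sum_(0 <= j < n) 'C(j, s) = 'C(n, s.+1).
Proof.
elim: n => [|n IH]; first by rewrite big_geq.
by rewrite big_nat_recr //= IH binS.
Qed.

Lemma sumbin K alpha s : 1 <= alpha -> alpha <= K ->
  \sum_(0 <= k < K) 'C(minn k alpha.-1, s) = 'C(alpha, s.+1) + (K - alpha) * 'C(alpha.-1, s).
Proof.
move=> a1 aK.
have base : \sum_(0 <= k < alpha) 'C(minn k alpha.-1, s) = 'C(alpha, s.+1).
  rewrite -hockey; apply: eq_big_nat => k /andP [_ ka].
  by congr 'C(_, _); lia.
have : forall i, \sum_(0 <= k < alpha + i) 'C(minn k alpha.-1, s)
   = 'C(alpha, s.+1) + i * 'C(alpha.-1, s).
  elim=> [|i IH]; first by rewrite addn0 base mul0n addn0.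
  rewrite addnS big_nat_recr //= IH.
  have -> : minn (alpha + i) alpha.-1 = alpha.-1 by lia.
  by rewrite mulSn; lia.
move=> /(_ (K - alpha)); rewrite subnKC //.
Qed.

Lemma mod_small2 m F : m < F + F -> m %% F = if m < F then m else m - F.
Proof.
move=> h; case: ifP => h2; first by rewrite modn_small.
have -> : m = (m - F) + F by lia.
by rewrite modnDr modn_small; lia.
Qed.

Lemma exists_sum (I : finType) (Q : pred I) :
  (forall i j, Q i -> Q j -> i = j) -> ([exists i, Q i] : nat) = \sum_i Q i.
Proof.
move=> U; case: (pickP Q) => [i0 Qi0|none].
  have -> : [exists i, Q i] by apply/existsP; exists i0.
  rewrite (bigD1 i0) //= Qi0 big1 // => j nj.
  by case Qj: (Q j) => //; move: nj; rewrite (U _ _ Qj Qi0) eqxx.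
have -> : [exists i, Q i] = false by apply/existsP => -[i]; rewrite none.
by rewrite big1 // => i _; rewrite none.
Qed.

Section Main.
Variables (K alpha F B L : nat).
Hypotheses (a1 : 0 < alpha) (aK : alpha <= K) (KF : alpha = K -> K <= F).
Local Notation FI := (fidx K alpha F).
Variable Z : 'I_K -> {set (FI * 'I_B)}.
Variable enc : demand K alpha F -> library K alpha F B -> 'I_L -> bool.
Variable dec : 'I_K -> demand K alpha F -> (FI * 'I_B -> bool) ->
           ('I_L -> bool) -> 'I_B -> bool.
Hypothesis Hsel : forall k p, p \in Z k -> interested k p.1.
Hypothesis Hdec : forall d : demand K alpha F, admissible d ->
           forall (lib : library K alpha F B) (k : 'I_K) (i : 'I_B),
             dec k d (cache_content Z k lib) (enc d lib) i = lib (d k) i.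

Definition fF (c : 'I_F) (k : nat) : 'I_F :=
  Ordinal (ltn_pmod (c + k) (leq_ltn_trans (leq0n c) (ltn_ord c))).

Lemma card_imD (s : {perm 'I_K}) k : #|s @: Dset alpha k| == alpha.
Proof. by rewrite card_imset ?card_Dset //; exact: perm_inj. Qed.

Definition nf (c : 'I_F) (s : {perm 'I_K}) (k : 'I_K) : FI :=
  exist (fun x : 'I_F * {set 'I_K} => #|x.2| == alpha) (fF c k, s @: Dset alpha k) (card_imD s k).

Definition dm c s : demand K alpha F := fun j => nf c s (s^-1%g j).

Lemma dm_adm c s : admissible (dm c s).
Proof.
move=> j; rewrite /interested /dm /nf /= mem_imset_perm.
exact: Dset_in.
Qed.

Definition rk (s : {perm 'I_K}) (j : 'I_K) : nat := K - s^-1%g j.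

Definition Sg c s := Sacyc Z (dm c s) (rk s).

Lemma Sg_bound c s : #|Sg c s| <= L.
Proof. exact: (acyc_bound (Hdec (dm_adm c s))). Qed.

Definition Tp (p : FI * 'I_B) : {set 'I_K} := [set i | p \in Z i].

Lemma Sg_mem c s p : (p \in Sg c s) =
  [exists k, (p.1 == nf c s k) && [disjoint s @: Gset k & Tp p]].
Proof.
rewrite /Sg /Sacyc inE; apply/existsP/existsP => [[j /andP [e h]]|[k /andP [e h]]].
  exists (s^-1%g j); rewrite e /=.
  rewrite disjoint_subset; apply/subsetP => x; rewrite mem_imset_perm !inE => hx.
  move/forallP: h => /(_ x) /implyP; apply; rewrite /rk.
  have := ltn_ord (s^-1%g x); lia.
exists (s k); rewrite /dm permK e /=.
apply/forallP => i; apply/implyP => hi; apply/negP => pZ.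
move: h; rewrite disjoint_subset => /subsetP /(_ i).
rewrite mem_imset_perm !inE pZ /= => H; suff: false by []; apply: H.
move: hi; rewrite /rk permK; have := ltn_ord (s^-1%g i); have := ltn_ord k; lia.
Qed.

Lemma nf_inj c s k1 k2 : nf c s k1 = nf c s k2 -> k1 = k2.
Proof.
move=> /(congr1 val) /= [e1 e2].
case: (ltnP alpha K) => h.
  apply: (Dset_inj h a1); exact: (imset_inj (@perm_inj _ s) e2).
have aeq : alpha = K by lia.
have KF' := KF aeq.
move: e1 => /=.
have := ltn_ord c; have := ltn_ord k1; have := ltn_ord k2.
move=> h1 h2 h3.
rewrite !mod_small2; try lia.
move=> e; apply: val_inj => /=; move: e; do 2 case: ifP; lia.
Qed.

Definition coef p := \sum_(c : 'I_F) \sum_(s : {perm 'I_K}) (p \in Sg c s).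

Lemma sum_fF k f : \sum_(c : 'I_F) (fF c k == f) = 1.
Proof.
have inj : injective (fun c => fF c k).
  move=> c1 c2 /(congr1 val) /= /eqP; rewrite eqn_modDr !modn_small //.
  by move/eqP => e; apply: val_inj.

transitivity (\sum_(c : 'I_F) (c == f)).
  exact: (esym (reindex_inj inj (F := fun c => nat_of_bool (c == f)))).

by rewrite (bigD1 f) //= eqxx big1 // => c /negbTE ->.
Qed.

Lemma coef_eq p : coef p = \sum_(k : 'I_K) qc (Dset alpha k) (Gset k) (val p.1).2 (Tp p).
Proof.
rewrite /coef.
under eq_bigr => c _ do under eq_bigr => s _ do
  (rewrite Sg_mem exists_sum; last by move=> i j /andP [/eqP -> _] /andP [/eqP /nf_inj ? _]).
under eq_bigr => c _ do rewrite exchange_big /=.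
rewrite exchange_big /=; apply: eq_bigr => k _.
rewrite /qc -[RHS]mul1n -(sum_fF k (val p.1).1) big_distrl /=.
apply: eq_bigr => c _; rewrite big_distrr /=; apply: eq_bigr => s _.
have -> : (p.1 == nf c s k) = (fF c k == (val p.1).1) && (s @: Dset alpha k == (val p.1).2).
  rewrite -val_eqE /= [val p.1]surjective_pairing xpair_eqE.
  by rewrite ![_ == (val p.1).1]eq_sym ![_ == (val p.1).2]eq_sym.
by case: (fF c k == _); case: (_ == _); case: [disjoint _ & _].
Qed.

Lemma Tp_sub p : Tp p \subset (val p.1).2.
Proof. by apply/subsetP => i; rewrite inE => /Hsel. Qed.

Lemma coef_val p : coef p * ('C(K, alpha) * 'C(alpha, #|Tp p|)) =
  K`! * ('C(alpha, #|Tp p|.+1) + (K - alpha) * 'C(alpha.-1, #|Tp p|)).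
Proof.
rewrite coef_eq big_distrl /=.
transitivity (\sum_(k : 'I_K) K`! * 'C(minn k alpha.-1, #|Tp p|)).
  apply: eq_bigr => k _.
  have v : validp #|Dset alpha k| #|Tp p| (val p.1).2 (Tp p).
    by rewrite /validp card_Dset // (valP p.1) Tp_sub eqxx.
  by have := qc_const (Gset k) v; rewrite card_Dset // card_DGset.
rewrite -big_distrr /=; congr (_ * _).
rewrite -(big_mkord xpredT (fun k => 'C(minn k alpha.-1, #|Tp p|))).
exact: sumbin.
Qed.

Lemma coef_bound : \sum_p coef p <= F * K`! * L.
Proof.
rewrite /coef exchange_big /=.
apply: (@leq_trans (\sum_(c : 'I_F) \sum_(s : {perm 'I_K}) L)).
  apply: leq_sum => c _; rewrite exchange_big /=; apply: leq_sum => s _.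
  have -> : \sum_p (p \in Sg c s : nat) = #|Sg c s|.
    by rewrite -sum1_card [RHS]big_mkcond /=; apply: eq_bigr => p _; case: (_ \in _).
  exact: Sg_bound.
rewrite !sum_nat_const /= !cardT !size_enum_ord -(card_Sn K) cardT mulnA.
by [].
Qed.

Lemma sumTp : \sum_p #|Tp p| = \sum_k #|Z k|.
Proof.
transitivity (\sum_(p : FI * 'I_B) \sum_(k : 'I_K) (p \in Z k)).
  apply: eq_bigr => p _; rewrite -sum1_card [LHS]big_mkcond /=.
  by apply: eq_bigr => k _; rewrite inE; case: (_ \in _).
rewrite exchange_big /=; apply: eq_bigr => k _.
by rewrite -sum1_card [RHS]big_mkcond /=; apply: eq_bigr => p _; case: (_ \in _).
Qed.

Lemma card_FI : #|FI| = nfiles K alpha F.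
Proof.
rewrite /fidx card_sig /nfiles.
transitivity #|setX [set: 'I_F] [set A : {set 'I_K} | #|A| == alpha]|.
  by apply/eqP; rewrite eqn_leq; apply/andP; split; apply: subset_leq_card; apply/subsetP => x; rewrite !inE.
by rewrite cardsX cardsT card_ord card_draws card_ord.
Qed.

Lemma Tp_card p : #|Tp p| <= alpha.
Proof. by rewrite -(eqP (valP p.1)); apply: subset_leq_card; exact: Tp_sub. Qed.

End Main.

Local Open Scope ring_scope.

Lemma corner_closed (R : realFieldType) K alpha s : (1 <= alpha)%N -> (s <= alpha)%N ->
  @RLB_corner R K alpha s =
  (alpha%:R - s%:R) / (s%:R + 1) + (K - alpha)%:R * (alpha%:R - s%:R) / alpha%:R.
Proof.
move=> a1 sa.
have e1 : ('C(alpha, s.+1) * s.+1 = (alpha - s) * 'C(alpha, s))%N by rewrite mulnC mul_bin_left.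
have e2 : (alpha * 'C(alpha.-1, s) = (alpha - s) * 'C(alpha, s))%N by rewrite mul_bin_down.
have e1R : 'C(alpha, s.+1)%:R * (s%:R + 1) = (alpha%:R - s%:R) * 'C(alpha, s)%:R :> R.
  by rewrite natr1 -natrB // -!natrM e1.
have e2R : alpha%:R * 'C(alpha.-1, s)%:R = (alpha%:R - s%:R) * 'C(alpha, s)%:R :> R.
  by rewrite -natrB // -!natrM e2.
have cpos : 'C(alpha, s)%:R != 0 :> R by rewrite pnatr_eq0 -lt0n bin_gt0.
have s1 : s%:R + 1 != 0 :> R by rewrite natr1 pnatr_eq0.
have a0 : alpha%:R != 0 :> R by rewrite pnatr_eq0 -lt0n.
rewrite /RLB_corner.
have -> : 'C(alpha, s.+1)%:R = (alpha%:R - s%:R) * 'C(alpha, s)%:R / (s%:R + 1) :> R.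
  by rewrite -e1R mulfK.
have -> : 'C(alpha.-1, s)%:R = (alpha%:R - s%:R) * 'C(alpha, s)%:R / alpha%:R :> R.
  by rewrite -e2R mulrC mulKf.
by field; rewrite cpos s1 a0.
Qed.

Lemma corner_convex (R : realFieldType) K alpha s t : (1 <= alpha)%N -> (alpha <= K)%N ->
  (s <= alpha)%N -> (t < alpha)%N ->
  @RLB_corner R K alpha t + (s%:R - t%:R) * (@RLB_corner R K alpha t.+1 - @RLB_corner R K alpha t)
  <= @RLB_corner R K alpha s.
Proof.
move=> a1 aK sa ta.
rewrite !corner_closed // ?(ltnW ta) //.
set a : R := alpha%:R; set x : R := s%:R; set y : R := t%:R; set c : R := (K - alpha)%:R.
have -> : t.+1%:R = y + 1 :> R by rewrite /y -addn1 natrD.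
have x0 : 0 <= x by rewrite /x ler0n.
have y0 : 0 <= y by rewrite /y ler0n.
have ap : 0 < a by rewrite /a ltr0n.
have key : 0 <= (y - x) * (y - x + 1).
  case: (leqP s t) => h.
    have : x <= y by rewrite /x /y ler_nat.
    move=> h'; apply: mulr_ge0; lra.
  have : y + 1 <= x by rewrite /x /y natr1 ler_nat.
  move=> h'; apply: mulr_le0; lra.
rewrite -subr_ge0.
have -> : (a - x) / (x + 1) + c * (a - x) / a -
  ((a - y) / (y + 1) + c * (a - y) / a +
   (x - y) * ((a - (y + 1)) / (y + 1 + 1) + c * (a - (y + 1)) / a -
              ((a - y) / (y + 1) + c * (a - y) / a)))
  = (a + 1) * ((y - x) * (y - x + 1)) / ((x + 1) * (y + 1) * (y + 2)).
  field; apply/and4P; split; apply: lt0r_neq0; have := ler0n R t; have := ler0n R s; have := ap; rewrite /a; lra.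
apply: divr_ge0; first by apply: mulr_ge0 => //; lra.
apply: mulr_ge0; [apply: mulr_ge0|]; lra.
Qed.

Lemma corner_decr (R : realFieldType) K alpha t : (1 <= alpha)%N -> (alpha <= K)%N ->
  (t < alpha)%N -> @RLB_corner R K alpha t.+1 <= @RLB_corner R K alpha t.
Proof.
move=> a1 aK ta.
rewrite !corner_closed // ?(ltnW ta) //.
set a : R := alpha%:R; set y : R := t%:R; set c : R := (K - alpha)%:R.
have -> : t.+1%:R = y + 1 :> R by rewrite /y -addn1 natrD.
have y0 : 0 <= y by rewrite /y ler0n.
have c0 : 0 <= c by rewrite /c ler0n.
have ap : 0 < a by rewrite /a ltr0n.
rewrite -subr_ge0.
have -> : (a - y) / (y + 1) + c * (a - y) / a - ((a - (y + 1)) / (y + 1 + 1) + c * (a - (y + 1)) / a)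
  = (a + 1) / ((y + 1) * (y + 2)) + c / a.
  field; apply/and3P; split; apply: lt0r_neq0; have := ler0n R t; have := ap; rewrite /a; lra.
apply: addr_ge0; apply: divr_ge0 => //; try lra.
apply: mulr_ge0; lra.
Qed.

Lemma part2 (R : realFieldType) (K alpha : nat) :
  (1 <= K)%N -> (1 <= alpha <= K)%N ->
  (forall t : nat, (t <= alpha)%N ->
     let gamma : R := t%:R / K%:R in
     let gamma_a : R := K%:R * gamma / alpha%:R in
     @RLB_corner R K alpha t =
       K%:R * (1 - gamma_a) / (K%:R * gamma + 1) *
       ((K - alpha)%:R * gamma + 1)).
Proof.
move=> K1 /andP [a1 aK] t ta /=.
rewrite corner_closed // natrB //.
have kp : 0 < K%:R :> R by rewrite ltr0n.
have ap : 0 < alpha%:R :> R by rewrite ltr0n.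
have t0 : 0 <= t%:R :> R by rewrite ler0n.
field; apply/and3P; split; apply: lt0r_neq0; lra.
Qed.

Section Fin.
Variables (K alpha F B L : nat).
Hypotheses (a1 : (0 < alpha)%N) (aK : (alpha <= K)%N) (KF : alpha = K -> (K <= F)%N).
Hypothesis (F1 : (1 <= F)%N) (B1 : (0 < B)%N).
Local Notation FI := (fidx K alpha F).
Variable Z : 'I_K -> {set (FI * 'I_B)}.
Variable enc : demand K alpha F -> library K alpha F B -> 'I_L -> bool.
Variable dec : 'I_K -> demand K alpha F -> (FI * 'I_B -> bool) ->
           ('I_L -> bool) -> 'I_B -> bool.
Hypothesis Hsel : forall k p, p \in Z k -> interested k p.1.
Hypothesis Hdec : forall d : demand K alpha F, admissible d ->
           forall (lib : library K alpha F B) (k : 'I_K) (i : 'I_B),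
             dec k d (cache_content Z k lib) (enc d lib) i = lib (d k) i.
Variables (R : realFieldType) (M Rt : R) (t : nat).
Hypotheses (ta : (t < alpha)%N) (hL : L%:R <= Rt * B%:R)
  (hZ : forall k, #|Z k|%:R <= M * B%:R).

Let c0 := @RLB_corner R K alpha t.
Let Dl := @RLB_corner R K alpha t.+1 - @RLB_corner R K alpha t.
Let sp (p : FI * 'I_B) := #|Tp Z p|%N.

Lemma coefR p : (coef aK Z p)%:R = K`!%:R / 'C(K, alpha)%:R * @RLB_corner R K alpha (sp p).
Proof.
have e := coef_val a1 aK KF Hsel p.
have := congr1 (fun n : nat => n%:R : R) e; rewrite /= !natrM natrD natrM => e'.
have ck : 'C(K, alpha)%:R != 0 :> R by rewrite pnatr_eq0 -lt0n bin_gt0.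
have ca : 'C(alpha, sp p)%:R != 0 :> R by rewrite pnatr_eq0 -lt0n bin_gt0 Tp_card.
apply: (mulIf (mulf_neq0 ck ca)); rewrite e' /RLB_corner /sp; field; rewrite ck ca //.
Qed.

Lemma main_ineq : @RLB_seg R K alpha F t M <= Rt.
Proof.
set NR : R := (nfiles K alpha F)%:R.
set CK : R := 'C(K, alpha)%:R.
set KR : R := K`!%:R.
set BR : R := B%:R.
have NRe : NR = F%:R * CK by rewrite /NR /nfiles natrM.
have ckp : 0 < CK by rewrite /CK ltr0n bin_gt0.
have krp : 0 < KR by rewrite /KR ltr0n fact_gt0.
have fp : 0 < F%:R :> R by rewrite ltr0n.
have bp : 0 < BR by rewrite /BR ltr0n.
have K0 : (0 < K)%N by apply: leq_trans aK.
have kp : 0 < K%:R :> R by rewrite ltr0n.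
have nrp : 0 < NR by rewrite NRe mulr_gt0.
set S := \sum_(p : FI * 'I_B) @RLB_corner R K alpha (sp p).
set S1 := \sum_(p : FI * 'I_B) (sp p)%:R : R.
have h1 : KR / CK * S <= F%:R * KR * (Rt * BR).
  rewrite /S mulr_sumr.
  have e : \sum_(p : FI * 'I_B) KR / CK * @RLB_corner R K alpha (sp p)
         = (\sum_(p : FI * 'I_B) coef aK Z p)%:R.
    by rewrite natr_sum; apply: eq_bigr => p _; rewrite coefR.
  rewrite e; apply: (@le_trans _ _ (F%:R * KR * L%:R)).
    rewrite -!natrM ler_nat; exact: (coef_bound a1 aK Hdec).
  by rewrite ler_pM2l // mulr_gt0.
have h1' : S <= NR * Rt * BR.
  have : KR / CK * S <= KR / CK * (NR * Rt * BR).
    by rewrite NRe; apply: (le_trans h1); rewrite le_eqVlt; apply/orP; left; apply/eqP; field; rewrite gt_eqF.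
  by rewrite ler_pM2l // divr_gt0.
have h2 : \sum_(p : FI * 'I_B) (c0 + ((sp p)%:R - t%:R) * Dl) <= S.
  apply: ler_sum => p _; apply: corner_convex => //; first exact: Tp_card.
have cardP : #|{: FI * 'I_B}| = (nfiles K alpha F * B)%N by rewrite card_prod card_FI card_ord.
have h2e : \sum_(p : FI * 'I_B) (c0 + ((sp p)%:R - t%:R) * Dl)
   = NR * BR * (c0 - t%:R * Dl) + Dl * S1.
  rewrite /S1.
  have -> : \sum_(p : FI * 'I_B) (c0 + ((sp p)%:R - t%:R) * Dl)
     = \sum_(p : FI * 'I_B) ((c0 - t%:R * Dl) + Dl * (sp p)%:R).
    by apply: eq_bigr => p _; ring.
  rewrite big_split /= -mulr_sumr sumr_const [#|_|]cardP -[_ *+ (_ * B)]mulr_natl natrM.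
  by [].
have h3 : S1 <= K%:R * M * BR.
  rewrite /S1 -natr_sum sumTp natr_sum.
  apply: (@le_trans _ _ (\sum_(k : 'I_K) M * BR)); first by apply: ler_sum => k _; exact: hZ.
  by rewrite sumr_const card_ord -[_ *+ K]mulr_natl mulrA.
have dl : Dl <= 0 by rewrite /Dl subr_le0; exact: corner_decr.
have h4 : Dl * (K%:R * M * BR) <= Dl * S1 by rewrite ler_wnM2l.
have goal_eq : @RLB_seg R K alpha F t M
   = (NR * BR * (c0 - t%:R * Dl) + Dl * (K%:R * M * BR)) / (NR * BR).
  rewrite /RLB_seg -/NR -/c0 -/Dl; field.
  by rewrite !gt_eqF.
rewrite goal_eq ler_pdivrMr ?mulr_gt0 //.
have := le_trans h2 h1'; rewrite h2e => h5.
have : NR * BR * (c0 - t%:R * Dl) + Dl * (K%:R * M * BR) <= NR * Rt * BR.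
  by apply: le_trans h5; rewrite lerD2l.
by move=> h6; apply: (le_trans h6); rewrite le_eqVlt; apply/orP; left; apply/eqP; ring.
Qed.
End Fin.

Theorem theorem1 (R : realFieldType) (K alpha F : nat) :
  (1 <= K)%N -> (1 <= alpha <= K)%N -> (1 <= F)%N ->
  (K <= nfiles K alpha F)%N ->
  (forall M Rt : R,
     0 <= M <= alpha%:R * (nfiles K alpha F)%:R / K%:R ->
     @achievable_us R K alpha F M Rt ->
     forall t : nat, (t < alpha)%N ->
       t%:R * (nfiles K alpha F)%:R / K%:R <= M <=
         t.+1%:R * (nfiles K alpha F)%:R / K%:R ->
       @RLB_seg R K alpha F t M <= Rt)
  /\
  (forall t : nat, (t <= alpha)%N ->
     let gamma : R := t%:R / K%:R in
     let gamma_a : R := K%:R * gamma / alpha%:R in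
     @RLB_corner R K alpha t =
       K%:R * (1 - gamma_a) / (K%:R * gamma + 1) *
       ((K - alpha)%:R * gamma + 1)).
Proof.
move=> K1 haK F1 KN; split; last exact: part2.
move: (haK) => /andP [a1 aK].
move=> M Rt _ [B [L [Z [enc [dec [B0 hL hZ hSel hDec]]]]]] t ta _.
have KF : alpha = K -> (K <= F)%N.
  by move=> e; move: KN; rewrite /nfiles e binn muln1.
exact: (main_ineq a1 aK KF F1 B0 hSel hDec ta hL hZ).
Qed.
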